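(* A rational $\mathfrak{sl}(2)$-module is indecomposable as an $\mathfrak{sl}(2)$-module if and only if it is $\mathcal R$-indecomposable. Moreover, every indecomposable rational module is a generalized Casimir module. Hence the classes of indecomposable objects in $\mathcal R$, of $\mathcal R$-indecomposable objects of $\mathcal R$, of $\mathcal{RC}^\bullet$-indecomposable objects of $\mathcal{RC}^\bullet$ and of indecomposable objects of $\mathcal{RC}^\bullet$ all coincide.
   Context: $\mathfrak{sl}(2)$ has basis $L_{-1}=f$, $L_0=-\tfrac12 h$, $L_1=-e$ for a Chevalley basis $e,f,h$. An $\mathfrak{sl}(2)$-module $(V,\rho)$ is a $\mathbb{C}[z]$-module via $z\cdot v=\rho(L_0)v$; it is rational if it is, with this structure, a finite-dimensional $\mathbb{C}(z)$-vector space. $\mathcal R$ is the full subcategory of rational modules. Casimir operator: $C_\rho=\rho(L_0)(\rho(L_0)-1)-\rho(L_{-1})\rho(L_1)$; a module is generalized Casimir (of level $\mu$) if $(C_\rho-\mu)^n=0$ for some $\mu\in\mathbb{C}$, $n\ge1$; $\mathcal{RC}^\bullet$ is the full subcategory of rational generalized Casimir modules. A rational module $W$ is indecomposable if it is nonzero and not a direct sum of two nonzero $\mathfrak{sl}(2)$-submodules, and $\mathcal R$-indecomposable (resp. $\mathcal{RC}^\bullet$-indecomposable) if it is nonzero and not a direct sum of two nonzero rational (resp. rational generalized Casimir) submodules. *)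

(* Defs.v *)
From HB Require Import structures.
From mathcomp Require Import all_boot all_order all_algebra.
From mathcomp Require Import reals complex.
Set Implicit Arguments. Unset Strict Implicit. Unset Printing Implicit Defensive.
Import Order.TTheory GRing.Theory Num.Theory.
Local Open Scope ring_scope.

Section Sl2.
Variables (K : fieldType) (V : lmodType K).

Definition lin_map (g : V -> V) : Prop :=
  forall (a : K) (u v : V), g (a *: u + v) = a *: g u + g v.

Record sl2rep := Sl2rep {
  rho_e : V -> V;
  rho_f : V -> V;
  rho_h : V -> V;
  rho_e_lin : lin_map rho_e;
  rho_f_lin : lin_map rho_f;
  rho_h_lin : lin_map rho_h;
  rho_he : forall v, rho_h (rho_e v) - rho_e (rho_h v) = 2%:R *: rho_e v;
  rho_hf : forall v, rho_h (rho_f v) - rho_f (rho_h v) = - (2%:R *: rho_f v);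
  rho_ef : forall v, rho_e (rho_f v) - rho_f (rho_e v) = rho_h v
}.

Variable rho : sl2rep.

Definition Lm1 (v : V) : V := rho_f rho v.
Definition L0 (v : V) : V := - (2%:R^-1 *: rho_h rho v).
Definition L1 (v : V) : V := - rho_e rho v.

(* action of a polynomial p(z) through z . v = L_0 v *)
Definition peval (p : {poly K}) (v : V) : V :=
  \sum_(i < size p) p`_i *: iter i L0 v.

Definition casimir (v : V) : V := L0 (L0 v - v) - Lm1 (L1 v).

Definition is_submod (S : V -> Prop) : Prop :=
  [/\ S 0, (forall u v, S u -> S v -> S (u + v)) &
      (forall (a : K) u, S u -> S (a *: u))] /\
  [/\ (forall u, S u -> S (rho_e rho u)),
      (forall u, S u -> S (rho_f rho u)) &
      (forall u, S u -> S (rho_h rho u))].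

(* The submodule S (with the C[z]-structure z . v = L_0 v) is a
   finite-dimensional C(z)-vector space: every nonzero polynomial acts
   bijectively on S (so the action extends to C(z)), and S is spanned
   over C(z) by finitely many vectors. *)
Definition rational_on (S : V -> Prop) : Prop :=
  (forall p : {poly K}, p != 0 ->
     (forall v, S v -> peval p v = 0 -> v = 0) /\
     (forall w, S w -> exists v, S v /\ peval p v = w)) /\
  exists vs : seq V, (forall i, (i < size vs)%N -> S (nth 0 vs i)) /\
    forall v, S v -> exists (q : {poly K}) (ps : 'I_(size vs) -> {poly K}),
      q != 0 /\ peval q v = \sum_(i < size vs) peval (ps i) (nth 0 vs i).

Definition gen_casimir_on (S : V -> Prop) : Prop :=
  exists (mu : K) (n : nat), (0 < n)%N /\
    forall v, S v -> iter n (fun w => casimir w - mu *: w) v = 0.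

Definition nonzero_on (S : V -> Prop) : Prop := exists v, S v /\ v != 0.

Definition direct_sum (S S1 S2 : V -> Prop) : Prop :=
  (forall v, S1 v -> S2 v -> v = 0) /\
  (forall v, S v <-> exists v1 v2, [/\ S1 v1, S2 v2 & v = v1 + v2]).

Definition indec_wrt (P : (V -> Prop) -> Prop) (S : V -> Prop) : Prop :=
  nonzero_on S /\
  ~ (exists S1 S2 : V -> Prop,
       [/\ is_submod S1, is_submod S2, P S1 & P S2] /\
       [/\ nonzero_on S1, nonzero_on S2 & direct_sum S S1 S2]).

Definition whole : V -> Prop := fun _ => True.

Definition rational_mod : Prop := rational_on whole.
Definition gen_casimir : Prop := gen_casimir_on whole.
Definition rational_gen_casimir : Prop := rational_mod /\ gen_casimir.

Definition indecomposable : Prop := indec_wrt (fun _ => True) whole.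
Definition R_indecomposable : Prop := indec_wrt rational_on whole.
Definition RC_indecomposable : Prop :=
  indec_wrt (fun S => rational_on S /\ gen_casimir_on S) whole.

End Sl2.

(* Main.v *)
Require Import Defs.
From HB Require Import structures.
From mathcomp Require Import all_boot all_order all_algebra.
From mathcomp Require Import reals complex.
From mathcomp Require Import ring lra zify.
From Stdlib Require Import Classical ClassicalEpsilon.
Import GRing.Theory Num.Theory.
Local Open Scope ring_scope.

Section Gev.
Context {R : comNzRingType} {V : zmodType}.
Variables (coef : R -> V -> V) (T : V -> V).
Hypothesis cDv : forall a u v, coef a (u + v) = coef a u + coef a v.
Hypothesis cDr : forall a b v, coef (a + b) v = coef a v + coef b v.
Hypothesis c0 : forall v, coef 0 v = 0.
Hypothesis c1 : forall v, coef 1 v = v.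
Hypothesis cM : forall a b v, coef (a * b) v = coef a (coef b v).
Hypothesis cT : forall a v, coef a (T v) = T (coef a v).
Hypothesis TD : forall u v, T (u + v) = T u + T v.

Definition gev (P : {poly R}) (v : V) : V :=
  \sum_(i < size P) coef P`_i (iter i T v).

Lemma add_morph0 (g : V -> V) : (forall u v, g (u + v) = g u + g v) -> g 0 = 0.
Proof. by move=> h; apply: (@addrI _ (g 0)); rewrite -h !addr0. Qed.

Lemma add_morphN (g : V -> V) : (forall u v, g (u + v) = g u + g v) ->
  forall v, g (- v) = - g v.
Proof.
move=> h v; apply: (@addrI _ (g v)); rewrite -h !subrr; exact: add_morph0.
Qed.

Lemma add_morph_sum (g : V -> V) : (forall u v, g (u + v) = g u + g v) ->
  forall I (r : seq I) (P : pred I) (F : I -> V),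
  g (\sum_(i <- r | P i) F i) = \sum_(i <- r | P i) g (F i).
Proof. by move=> h I r P F; apply: (big_morph g h); exact: add_morph0. Qed.

Arguments add_morph0 [g].
Arguments add_morphN [g].
Arguments add_morph_sum [g].

Lemma coefv0 a : coef a 0 = 0. Proof. exact: add_morph0. Qed.
Lemma coef_sum a I (r : seq I) (P : pred I) (F : I -> V) :
  coef a (\sum_(i <- r | P i) F i) = \sum_(i <- r | P i) coef a (F i).
Proof. exact: add_morph_sum. Qed.
Lemma coefrN a v : coef (- a) v = - coef a v.
Proof. by apply: (@addrI _ (coef a v)); rewrite -cDr !subrr c0. Qed.
Lemma coef_rsum I (r : seq I) (P : pred I) (F : I -> R) v :
  coef (\sum_(i <- r | P i) F i) v = \sum_(i <- r | P i) coef (F i) v.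
Proof. by apply: (big_morph (coef^~ v)) => // *; rewrite c0. Qed.
Lemma T0 : T 0 = 0. Proof. exact: add_morph0. Qed.
Lemma iterT0 i : iter i T 0 = 0.
Proof. by elim: i => //= i ->; rewrite T0. Qed.
Lemma iterTD i u v : iter i T (u + v) = iter i T u + iter i T v.
Proof. by elim: i => //= i ->; rewrite TD. Qed.
Lemma coef_iter a i v : coef a (iter i T v) = iter i T (coef a v).
Proof. by elim: i => //= i <-; rewrite cT. Qed.

Lemma gev_pad (P : {poly R}) n v : (size P <= n)%N ->
  gev P v = \sum_(i < n) coef P`_i (iter i T v).
Proof.
move=> hn; rewrite /gev (big_ord_widen n (fun i => coef P`_i (iter i T v)) hn).
rewrite big_mkcond /=; apply: eq_bigr => i _; case: ifP => // /negbT.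
by rewrite -leqNgt => /(nth_default 0) ->; rewrite c0.
Qed.

Lemma gev0 v : gev 0 v = 0.
Proof. by rewrite /gev size_poly0 big_ord0. Qed.

Lemma gevD P Q v : gev (P + Q) v = gev P v + gev Q v.
Proof.
pose n := maxn (size P) (size Q).
rewrite (@gev_pad (P + Q) n) ?size_add // (@gev_pad P n) ?leq_maxl //.
rewrite (@gev_pad Q n) ?leq_maxr // -big_split /=.
by apply: eq_bigr => i _; rewrite coefD cDr.
Qed.

Lemma gevN P v : gev (- P) v = - gev P v.
Proof.
rewrite /gev size_polyN (big_morph _ (@opprD _) (@oppr0 _)).
by apply: eq_bigr => i _; rewrite coefN coefrN.
Qed.

Lemma gevB P Q v : gev (P - Q) v = gev P v - gev Q v.
Proof. by rewrite gevD gevN. Qed.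

Lemma gev_v0 P : gev P 0 = 0.
Proof. by rewrite /gev big1 // => i _; rewrite iterT0 coefv0. Qed.

Lemma gevDv P u v : gev P (u + v) = gev P u + gev P v.
Proof. by rewrite /gev -big_split; apply: eq_bigr => i _; rewrite iterTD cDv. Qed.

Lemma gevNv P v : gev P (- v) = - gev P v.
Proof. exact: add_morphN (gevDv P) v. Qed.

Lemma gev_sumv P I (r : seq I) (Pr : pred I) (F : I -> V) :
  gev P (\sum_(i <- r | Pr i) F i) = \sum_(i <- r | Pr i) gev P (F i).
Proof. exact: add_morph_sum (gevDv P) _ _ _ _. Qed.

Lemma gev_sumP I (r : seq I) (Pr : pred I) (F : I -> {poly R}) v :
  gev (\sum_(i <- r | Pr i) F i) v = \sum_(i <- r | Pr i) gev (F i) v.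
Proof. by apply: (big_morph (gev^~ v)) => [P Q|]; rewrite ?gevD ?gev0. Qed.

Lemma gevC c v : gev c%:P v = coef c v.
Proof. by rewrite (@gev_pad _ 1) ?size_polyC ?leq_b1 // big_ord1 coefC. Qed.

Lemma gevX v : gev 'X v = T v.
Proof.
rewrite (@gev_pad _ 2) ?size_polyX // !big_ord_recl big_ord0 !coefX /=.
by rewrite c0 c1 add0r addr0.
Qed.

Lemma gevMX P v : gev (P * 'X) v = gev P (T v).
Proof.
rewrite (@gev_pad _ (size P).+1); last first.
  by apply: leq_trans (size_mul_leq _ _) _; rewrite size_polyX addn2.
rewrite big_ord_recl coefMX eqxx c0 add0r /gev; apply: eq_bigr => i _.
by rewrite coefMX /= -iterSr.
Qed.

Lemma gevCM c Q v : gev (c%:P * Q) v = coef c (gev Q v).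
Proof.
rewrite (@gev_pad _ (size Q)); last first.
  apply: leq_trans (size_mul_leq _ _) _; rewrite size_polyC.
  by case: (c != 0); rewrite ?add0n ?add1n // leq_pred.
rewrite /gev coef_sum; apply: eq_bigr => i _; by rewrite coefCM cM.
Qed.

Lemma gev_comm (S : V -> V) : (forall u v, S (u + v) = S u + S v) ->
  (forall v, S (T v) = T (S v)) -> (forall a v, S (coef a v) = coef a (S v)) ->
  forall P v, S (gev P v) = gev P (S v).
Proof.
move=> SD ST Sc P v; rewrite /gev (add_morph_sum SD); apply: eq_bigr => i _.
rewrite Sc; congr (coef _ _); by elim: (i : nat) => //= k <-; rewrite ST.
Qed.

Lemma gevT P v : T (gev P v) = gev P (T v).
Proof. by apply: gev_comm => [u w|w|a w]; rewrite ?TD ?cT. Qed.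

Lemma gevM P Q v : gev (P * Q) v = gev P (gev Q v).
Proof.
elim/poly_ind: P v => [|P c IH] v; first by rewrite mul0r !gev0.
rewrite mulrDl mulrAC gevD gevMX IH gevCM gevD gevMX gevC gevT.
by [].
Qed.

Lemma gev_eigen P s y : T y = coef s y -> gev P y = coef P.[s] y.
Proof.
move=> Ty; have it i : iter i T y = coef (s ^+ i) y.
  elim: i => [|i IH] /=; first by rewrite expr0 c1.
  by rewrite IH -cT Ty -cM exprSr.
rewrite horner_coef coef_rsum /gev; apply: eq_bigr => i _.
by rewrite it cM.
Qed.

End Gev.
Section Lin.
Context {K : fieldType} {V : lmodType K}.
Lemma linD {g : V -> V} : lin_map g -> forall u v, g (u + v) = g u + g v.
Proof. by move=> hg u v; have := hg 1 u v; rewrite !scale1r. Qed.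
Lemma lin0 {g : V -> V} : lin_map g -> g 0 = 0.
Proof. by move=> hg; apply: (@addrI _ (g 0)); rewrite -linD // !addr0. Qed.
Lemma linZ {g : V -> V} : lin_map g -> forall a u, g (a *: u) = a *: g u.
Proof. by move=> hg a u; have := hg a u 0; rewrite !addr0 lin0 // addr0. Qed.
Lemma linN {g : V -> V} : lin_map g -> forall u, g (- u) = - g u.
Proof. by move=> hg u; rewrite -scaleN1r linZ // scaleN1r. Qed.
Lemma linB {g : V -> V} : lin_map g -> forall u v, g (u - v) = g u - g v.
Proof. by move=> hg u v; rewrite linD // linN. Qed.
Lemma lin_comp (g1 g2 : V -> V) : lin_map g1 -> lin_map g2 -> lin_map (fun v => g1 (g2 v)).
Proof. by move=> h1 h2 a u v; rewrite /= h2 h1. Qed.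
Lemma lin_add (g1 g2 : V -> V) : lin_map g1 -> lin_map g2 -> lin_map (fun v => g1 v + g2 v).
Proof. by move=> h1 h2 a u v; rewrite h1 h2 scalerDr addrACA. Qed.
Lemma lin_opp (g : V -> V) : lin_map g -> lin_map (fun v => - g v).
Proof. by move=> h1 a u v; rewrite h1 opprD scalerN. Qed.
Lemma lin_scale (c : K) (g : V -> V) : lin_map g -> lin_map (fun v => c *: g v).
Proof. by move=> h1 a u v; rewrite h1 scalerDr !scalerA mulrC. Qed.
Lemma hlp1 (a b c : V) : a - b - c = a + b - (c + 2%:R *: b).
Proof. by rewrite scaler_nat mulr2n !opprD !addrA [a + b - c]addrAC addrK addrAC. Qed.
Lemma hlp2 (A B u X : V) : A - B - (X + 2%:R *: (B - u)) = A - B - B - (B - u - u) - X.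
Proof.
rewrite scaler_nat mulr2n !opprD !opprK !addrA.
rewrite [A - B - X - B]addrAC [A - B - B - X + u]addrAC [A - B - B + u - X - B]addrAC.
by rewrite [A - B - B + u - B - X + u]addrAC [A - B - B + u - B]addrAC.
Qed.
Lemma hlp3 (A B Y : V) : Y + 2%:R *: B = A + B - (A - B - Y).
Proof.
rewrite scaler_nat mulr2n !opprD !opprK !addrA [A + B - A]addrAC subrr add0r.
by rewrite [RHS]addrC addrA.
Qed.
Lemma lin_id : lin_map (fun v : V => v). Proof. by []. Qed.
End Lin.

Section Sl2.
Context {K : numClosedFieldType} {V : lmodType K} (rho : sl2rep V).
Local Notation e := (rho_e rho).
Local Notation f := (rho_f rho).
Local Notation h := (rho_h rho).
Local Notation l0 := (L0 rho).
Local Notation l1 := (L1 rho).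
Local Notation lm1 := (Lm1 rho).
Local Notation cas := (casimir rho).

Lemma e_lin : lin_map e. Proof. exact: rho_e_lin. Qed.
Lemma f_lin : lin_map f. Proof. exact: rho_f_lin. Qed.
Lemma h_lin : lin_map h. Proof. exact: rho_h_lin. Qed.
Lemma l0_lin : lin_map l0.
Proof. by apply: lin_opp; apply: lin_scale; exact: h_lin. Qed.
Lemma l1_lin : lin_map l1.
Proof. by apply: lin_opp; exact: e_lin. Qed.
Lemma lm1_lin : lin_map lm1. Proof. exact: f_lin. Qed.
Lemma cas_lin : lin_map cas.
Proof.
rewrite /casimir; apply: lin_add; last by apply: lin_opp; apply: lin_comp; [exact: lm1_lin|exact: l1_lin].
apply: lin_comp; first exact: l0_lin.
by apply: lin_add; [exact: l0_lin|apply: lin_opp; exact: lin_id].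
Qed.

Lemma two_neq0 : (2%:R : K) != 0. Proof. by rewrite pnatr_eq0. Qed.

Lemma c10 v : l1 (l0 v) = l0 (l1 v) + l1 v.
Proof.
rewrite /L1 /L0 (linN e_lin) (linZ e_lin) (linN h_lin) opprK scalerN opprK.
have := rho_he rho v => /eqP; rewrite subr_eq => /eqP ->.
by rewrite scalerDr scalerA mulVf ?two_neq0 // scale1r addrAC subrr add0r.
Qed.

Lemma cm0 v : lm1 (l0 v) = l0 (lm1 v) - lm1 v.
Proof.
rewrite /Lm1 /L0 (linN f_lin) (linZ f_lin).
have := rho_hf rho v => /eqP; rewrite subr_eq => /eqP ->.
rewrite scalerDr scalerN scalerA mulVf ?two_neq0 // scale1r.
by rewrite opprD opprK addrAC subrr add0r.
Qed.

Lemma c1m v : l1 (lm1 v) = lm1 (l1 v) + 2%:R *: l0 v.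
Proof.
rewrite /L1 /Lm1 /L0 (linN f_lin) scalerN scalerA mulfV ?two_neq0 // scale1r.
have := rho_ef rho v => /eqP; rewrite subr_eq => /eqP ->.
by rewrite opprD addrC.
Qed.


Lemma cas0 v : cas (l0 v) = l0 (cas v).
Proof.
rewrite /casimir c10 (linD lm1_lin) cm0 subrK.
by rewrite (linB l0_lin (l0 (l0 v - v))) (linB l0_lin (l0 v) v).
Qed.

Lemma cas1 v : cas (l1 v) = l1 (cas v).
Proof.
rewrite /casimir (linB l1_lin) c1m c10 (linB l1_lin) c10 addrK.
by rewrite (linB l0_lin) hlp1.
Qed.

Lemma casm v : cas (lm1 v) = lm1 (cas v).
Proof.
rewrite /casimir c1m (linB lm1_lin) (linD lm1_lin) cm0 (linB lm1_lin) cm0.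
by rewrite (linZ lm1_lin) cm0 !(linB l0_lin) hlp2.
Qed.

Lemma cas_alt v : l1 (lm1 v) = l0 (l0 v + v) - cas v.
Proof.
rewrite c1m /casimir (linD l0_lin) (linB l0_lin) ; exact: hlp3.
Qed.




Definition sc (c : K) (v : V) := c *: v.
Lemma pevalE p v : peval rho p v = gev sc l0 p v. Proof. by []. Qed.

End Sl2.

Section Scal.
Context {K : fieldType} {V : lmodType K}.
Context {T : V -> V}.
Hypothesis hT : lin_map T.
Set Default Proof Using "hT".
Local Notation ev := (gev (fun (c : K) (v : V) => c *: v) T).

Let cDv : forall (a : K) (u v : V), a *: (u + v) = a *: u + a *: v.
Proof. by move=> *; rewrite scalerDr. Qed.
Let cDr : forall (a b : K) (v : V), (a + b) *: v = a *: v + b *: v.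
Proof. by move=> *; rewrite scalerDl. Qed.
Let c0 : forall v : V, (0 : K) *: v = 0. Proof. by move=> *; rewrite scale0r. Qed.
Let c1 : forall v : V, (1 : K) *: v = v. Proof. by move=> *; rewrite scale1r. Qed.
Let cM : forall (a b : K) (v : V), (a * b) *: v = a *: (b *: v).
Proof. by move=> *; rewrite scalerA. Qed.
Let cT : forall (a : K) v, a *: T v = T (a *: v).
Proof. by move=> *; rewrite (linZ hT). Qed.
Let TD := linD hT.

Lemma evD P Q v : ev (P + Q) v = ev P v + ev Q v. Proof. exact: gevD. Qed.
Lemma evB P Q v : ev (P - Q) v = ev P v - ev Q v. Proof. exact: gevB. Qed.
Lemma ev0 v : ev 0 v = 0. Proof. exact: gev0. Qed.
Lemma evC c v : ev c%:P v = c *: v. Proof. exact: gevC. Qed.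
Lemma ev1 v : ev 1 v = v. Proof. by rewrite -polyC1 evC scale1r. Qed.
Lemma evX v : ev 'X v = T v. Proof. exact: gevX. Qed.
Lemma evM P Q v : ev (P * Q) v = ev P (ev Q v). Proof. exact: gevM. Qed.
Lemma ev_v0 P : ev P 0 = 0. Proof. exact: gev_v0. Qed.
Lemma evDv P u v : ev P (u + v) = ev P u + ev P v. Proof. exact: gevDv. Qed.
Lemma evNv P v : ev P (- v) = - ev P v. Proof. exact: gevNv. Qed.
Lemma ev_comm (S : V -> V) : lin_map S -> (forall v, S (T v) = T (S v)) ->
  forall P v, S (ev P v) = ev P (S v).
Proof.
move=> hS ST; apply: gev_comm => //; first exact: linD.
by move=> a w; rewrite (linZ hS).
Qed.
Lemma evZv P a v : ev P (a *: v) = a *: ev P v.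
Proof.
symmetry; apply: (@ev_comm (fun w => a *: w)); last by move=> w; rewrite (linZ hT).
exact: lin_scale lin_id.
Qed.
Lemma ev_lin P : lin_map (ev P).
Proof. by move=> a u v; rewrite evDv evZv. Qed.
Lemma ev_sumv P I (r : seq I) (Pr : pred I) (F : I -> V) :
  ev P (\sum_(i <- r | Pr i) F i) = \sum_(i <- r | Pr i) ev P (F i).
Proof. exact: gev_sumv. Qed.
Lemma ev_sumP I (r : seq I) (Pr : pred I) (F : I -> {poly K}) v :
  ev (\sum_(i <- r | Pr i) F i) v = \sum_(i <- r | Pr i) ev (F i) v.
Proof. exact: gev_sumP. Qed.
Lemma ev_eigen P s y : T y = s *: y -> ev P y = P.[s] *: y.
Proof. exact: gev_eigen. Qed.
Lemma evT P v : ev P (T v) = T (ev P v).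
Proof. by symmetry; apply: gevT. Qed.
Lemma ev_iter P i v : ev P (iter i T v) = iter i T (ev P v).
Proof. by elim: i => //= i <-; rewrite evT. Qed.
Unset Default Proof Using.
End Scal.

Section Main.
Context {K : numClosedFieldType} {V : lmodType K} (rho : sl2rep V).
Local Notation e := (rho_e rho).
Local Notation f := (rho_f rho).
Local Notation h := (rho_h rho).
Local Notation l0 := (L0 rho).
Local Notation l1 := (L1 rho).
Local Notation lm1 := (Lm1 rho).
Local Notation cas := (casimir rho).
Local Notation pev := (peval rho).

Definition cpol (p : {poly K}) (v : V) : V := gev (fun (c : K) (v : V) => c *: v) cas p v.

Lemma pevD p q v : pev (p + q) v = pev p v + pev q v. Proof. exact: (evD (l0_lin rho)). Qed.
Lemma pevB p q v : pev (p - q) v = pev p v - pev q v. Proof. exact: (evB (l0_lin rho)). Qed.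
Lemma pev0 v : pev 0 v = 0. Proof. exact: (ev0 (l0_lin rho)). Qed.
Lemma pevC c v : pev c%:P v = c *: v. Proof. exact: (evC (l0_lin rho)). Qed.
Lemma pev1 v : pev 1 v = v. Proof. exact: (ev1 (l0_lin rho)). Qed.
Lemma pevX v : pev 'X v = l0 v. Proof. exact: (evX (l0_lin rho)). Qed.
Lemma pevM p q v : pev (p * q) v = pev p (pev q v). Proof. exact: (evM (l0_lin rho)). Qed.
Lemma pev_v0 p : pev p 0 = 0. Proof. exact: (ev_v0 (l0_lin rho)). Qed.
Lemma pevDv p u v : pev p (u + v) = pev p u + pev p v. Proof. exact: (evDv (l0_lin rho)). Qed.
Lemma pevNv p v : pev p (- v) = - pev p v. Proof. exact: (evNv (l0_lin rho)). Qed.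
Lemma pevZv p a v : pev p (a *: v) = a *: pev p v. Proof. exact: (evZv (l0_lin rho)). Qed.
Lemma pev_lin p : lin_map (pev p). Proof. exact: (ev_lin (l0_lin rho)). Qed.
Lemma pev_comm (S : V -> V) : lin_map S -> (forall v, S (l0 v) = l0 (S v)) ->
  forall p v, S (pev p v) = pev p (S v).
Proof. exact: (ev_comm (l0_lin rho)). Qed.
Lemma pev_sumv p I (r : seq I) (Pr : pred I) (F : I -> V) :
  pev p (\sum_(i <- r | Pr i) F i) = \sum_(i <- r | Pr i) pev p (F i).
Proof. exact: (ev_sumv (l0_lin rho)). Qed.
Lemma pevl0 p v : pev p (l0 v) = l0 (pev p v). Proof. exact: (evT (l0_lin rho)). Qed.
Lemma pevcas p v : pev p (cas v) = cas (pev p v).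
Proof. by symmetry; apply: pev_comm; [exact: cas_lin|exact: cas0]. Qed.

Lemma cpolD p q v : cpol (p + q) v = cpol p v + cpol q v. Proof. exact: (evD (cas_lin rho)). Qed.
Lemma cpolB p q v : cpol (p - q) v = cpol p v - cpol q v. Proof. exact: (evB (cas_lin rho)). Qed.
Lemma cpolC c v : cpol c%:P v = c *: v. Proof. exact: (evC (cas_lin rho)). Qed.
Lemma cpol1 v : cpol 1 v = v. Proof. exact: (ev1 (cas_lin rho)). Qed.
Lemma cpolX v : cpol 'X v = cas v. Proof. exact: (evX (cas_lin rho)). Qed.
Lemma cpolM p q v : cpol (p * q) v = cpol p (cpol q v). Proof. exact: (evM (cas_lin rho)). Qed.
Lemma cpol_v0 p : cpol p 0 = 0. Proof. exact: (ev_v0 (cas_lin rho)). Qed.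
Lemma cpolDv p u v : cpol p (u + v) = cpol p u + cpol p v. Proof. exact: (evDv (cas_lin rho)). Qed.
Lemma cpolZv p a v : cpol p (a *: v) = a *: cpol p v. Proof. exact: (evZv (cas_lin rho)). Qed.
Lemma cpol_lin p : lin_map (cpol p). Proof. exact: (ev_lin (cas_lin rho)). Qed.
Lemma cpol_comm (S : V -> V) : lin_map S -> (forall v, S (cas v) = cas (S v)) ->
  forall p v, S (cpol p v) = cpol p (S v).
Proof. exact: (ev_comm (cas_lin rho)). Qed.

(* the bivariate action: outer variable = Casimir, inner = L0 *)
Definition act (P : {poly {poly K}}) (v : V) : V := gev pev cas P v.

Let aDv : forall a u v, pev a (u + v) = pev a u + pev a v. Proof. exact: pevDv. Qed.
Let aDr : forall a b v, pev (a + b) v = pev a v + pev b v. Proof. exact: pevD. Qed.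
Let a0 : forall v, pev 0 v = 0. Proof. exact: pev0. Qed.
Let a1 : forall v, pev 1 v = v. Proof. exact: pev1. Qed.
Let aM : forall a b v, pev (a * b) v = pev a (pev b v). Proof. exact: pevM. Qed.
Let aT : forall a v, pev a (cas v) = cas (pev a v). Proof. exact: pevcas. Qed.
Let aTD := linD (cas_lin rho).

Lemma actD P Q v : act (P + Q) v = act P v + act Q v. Proof. exact: gevD. Qed.
Lemma actB P Q v : act (P - Q) v = act P v - act Q v. Proof. exact: gevB. Qed.
Lemma act0 v : act 0 v = 0. Proof. exact: gev0. Qed.
Lemma actC c v : act c%:P v = pev c v. Proof. exact: gevC. Qed.
Lemma actX v : act 'X v = cas v. Proof. exact: gevX. Qed.
Lemma actM P Q v : act (P * Q) v = act P (act Q v). Proof. exact: gevM. Qed.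
Lemma act_v0 P : act P 0 = 0. Proof. exact: gev_v0. Qed.
Lemma actDv P u v : act P (u + v) = act P u + act P v. Proof. exact: gevDv. Qed.
Lemma act_sumv P I (r : seq I) (Pr : pred I) (F : I -> V) :
  act P (\sum_(i <- r | Pr i) F i) = \sum_(i <- r | Pr i) act P (F i).
Proof. exact: gev_sumv. Qed.
Lemma act_sumP I (r : seq I) (Pr : pred I) (F : I -> {poly {poly K}}) v :
  act (\sum_(i <- r | Pr i) F i) v = \sum_(i <- r | Pr i) act (F i) v.
Proof. exact: gev_sumP. Qed.
Lemma act_eigen P s y : cas y = pev s y -> act P y = pev P.[s] y.
Proof. exact: gev_eigen. Qed.
Lemma act_comm (S : V -> V) : (forall u v, S (u + v) = S u + S v) ->
  (forall v, S (cas v) = cas (S v)) -> (forall a v, S (pev a v) = pev a (S v)) ->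
  forall P v, S (act P v) = act P (S v).
Proof. exact: gev_comm. Qed.

End Main.

Section E.
Variables (K : numClosedFieldType) (V : lmodType K) (rho : sl2rep V).
Local Notation e := (rho_e rho).
Local Notation f := (rho_f rho).
Local Notation h := (rho_h rho).
Local Notation l0 := (L0 rho).
Local Notation l1 := (L1 rho).
Local Notation lm1 := (Lm1 rho).
Local Notation cas := (casimir rho).
Local Notation pev := (peval rho).
Local Notation act := (act rho).

Lemma shift_gen (S : V -> V) (c : K) : lin_map S ->
  (forall v, S (l0 v) = l0 (S v) + c *: S v) ->
  forall p v, S (pev p v) = pev (p \Po ('X + c%:P)) (S v).
Proof.
move=> hS Sl p; elim/poly_ind: p => [|p a IH] v.
  by rewrite comp_poly0 !pev0 (lin0 hS).
rewrite pevD pevM pevX pevC (linD hS) (linZ hS) IH Sl.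
rewrite comp_polyD comp_polyM comp_polyX comp_polyC pevD pevM pevC.
by rewrite pevD pevX pevC.
Qed.

Lemma l1_pev p v : l1 (pev p v) = pev (p \Po ('X + 1%:P)) (l1 v).
Proof. by apply: shift_gen; [exact: l1_lin| move=> w; rewrite c10 scale1r]. Qed.

Lemma lm1_pev p v : lm1 (pev p v) = pev (p \Po ('X + (-1)%:P)) (lm1 v).
Proof. by apply: shift_gen; [exact: lm1_lin| move=> w; rewrite cm0 scaleN1r]. Qed.

Lemma l0_pev p v : l0 (pev p v) = pev p (l0 v).
Proof. by rewrite pevl0. Qed.

Lemma act_pad (P : {poly {poly K}}) n v : (size P <= n)%N ->
  act P v = \sum_(i < n) pev P`_i (iter i cas v).
Proof. by move=> hn; apply: gev_pad => // w; exact: pev0. Qed.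

Lemma act_l0 P v : l0 (act P v) = act P (l0 v).
Proof.
apply: act_comm; [exact: linD (l0_lin rho)|by move=> w; rewrite cas0|].
by move=> a w; rewrite pevl0.
Qed.

Lemma act_cas P v : cas (act P v) = act P (cas v).
Proof.
apply: act_comm; [exact: linD (cas_lin rho)|by []|].
by move=> a w; rewrite pevcas.
Qed.

Lemma act_lin P : lin_map (act P).
Proof.
move=> a u v; rewrite actDv; congr (_ + _); symmetry.
apply: act_comm; [by move=> *; rewrite scalerDr| by move=> w; rewrite (linZ (cas_lin rho))|].
by move=> b w; rewrite pevZv.
Qed.

Lemma act_shift P v :
  act (map_poly (fun a => a \Po ('X + 1%:P)) P) (l1 v) = l1 (act P v).
Proof.
rewrite (@act_pad _ (size P)); last exact: size_poly.
rewrite (@act_pad P (size P)) // (@add_morph_sum _ l1 (linD (l1_lin rho))).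
apply: eq_bigr => i _; rewrite l1_pev coef_map_id0 ?comp_poly0 //.
congr (pev _ _); elim: (i : nat) => //= k IH; by rewrite -cas1 IH.
Qed.

Hypothesis hinj : forall p : {poly K}, p != 0 -> forall v, pev p v = 0 -> v = 0.

Lemma chain (P : {poly {poly K}}) (y : nat -> V) (s : nat -> {poly K}) :
  P != 0 -> (forall v, act P v = 0) -> (forall k, y k != 0) -> injective s ->
  (forall k, cas (y k) = pev (s k) (y k)) -> False.
Proof.
move=> P0 hP y0 sinj ys.
have rt k : root P (s k).
  apply/eqP; apply: contraNeq (y0 k) => hk; apply/eqP.
  by apply: (hinj _ hk); rewrite -act_eigen ?hP.
have hall : all (root P) (map s (iota 0 (size P))).
  by apply/allP => x /mapP [k _ ->].
have hu : uniq (map s (iota 0 (size P))).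
  by rewrite (map_inj_uniq sinj) iota_uniq.
have := max_poly_roots P0 hall hu.
by rewrite size_map size_iota ltnn.
Qed.


Definition sq (k : nat) : {poly K} := ('X - k%:R) * ('X - k.+1%:R).
Definition tq (k : nat) : {poly K} := ('X + k%:R) * ('X + k.+1%:R).

Lemma natr_comp (k : nat) (q : {poly K}) : (k%:R : {poly K}) \Po q = k%:R.
Proof. by rewrite -polyC_natr comp_polyC. Qed.

Lemma sq_shift k : sq k \Po ('X + (-1)%:P) = sq k.+1.
Proof.
rewrite /sq comp_polyM !comp_polyB comp_polyX !natr_comp polyCN polyC1.
ring.
Qed.

Lemma tq_shift k : tq k \Po ('X + 1%:P) = tq k.+1.
Proof.
rewrite /tq comp_polyM !comp_polyD comp_polyX !natr_comp polyC1.
ring.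
Qed.

Lemma nat_sq_inj (k m : nat) : (k * k.+1 = m * m.+1)%N -> k = m.
Proof. nia. Qed.

Lemma sq_inj : injective sq.
Proof.
move=> k m /(congr1 (horner^~ 0)); rewrite /sq -!polyC_natr !hornerE.
have E (n : nat) : (- n%:R) * (- n.+1%:R) = (n * n.+1)%:R :> K.
  by rewrite natrM; ring.
rewrite !E => /eqP; rewrite eqr_nat => /eqP; exact: nat_sq_inj.
Qed.

Lemma tq_inj : injective tq.
Proof.
move=> k m /(congr1 (horner^~ 0)); rewrite /tq -!polyC_natr !hornerE.
have E (n : nat) : (n%:R) * (n.+1%:R) = (n * n.+1)%:R :> K.
  by rewrite natrM; ring.
rewrite !E => /eqP; rewrite eqr_nat => /eqP; exact: nat_sq_inj.
Qed.

Lemma pev_XX1 v : pev ('X * ('X + 1)) v = l0 (l0 v + v).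
Proof. by rewrite pevM pevX pevD pevX pev1. Qed.

Lemma XX1_sq_neq0 k : 'X * ('X + 1) - sq k != 0.
Proof.
apply/negP => /eqP /(congr1 (horner^~ (-1))); rewrite /sq -!polyC_natr !hornerE.
have E : (-1) * (-1 + 1) - (-1 - k%:R) * (-1 - k.+1%:R) = - (k.+1 * k.+2)%:R :> K.
  by rewrite natrM; ring.
by rewrite E => /eqP; rewrite oppr_eq0 pnatr_eq0.
Qed.

Section Inj.
Variable P : {poly {poly K}}.
Hypothesis P0 : P != 0.
Hypothesis hP : forall v, act P v = 0.

Lemma l1_inj w : l1 w = 0 -> w = 0.
Proof.
move=> hw; apply/eqP/negPn/negP => w0.
pose y k := iter k lm1 w.
have ys k : cas (y k) = pev (sq k) (y k).
  elim: k => [|k IH] /=.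
    rewrite /casimir hw (lin0 (lm1_lin rho)) subr0 /sq.
    by rewrite subr0 pevM pevX pevB pevX pev1.
  by rewrite casm IH lm1_pev sq_shift.
have y0 k : y k != 0.
  elim: k => [|k IH] //=; apply/negP => /eqP H.
  have := cas_alt rho (y k); rewrite H (lin0 (l1_lin rho)) ys -pev_XX1 -pevB.
  move=> /esym /(hinj _ (XX1_sq_neq0 k)) yk0; by rewrite yk0 eqxx in IH.
exact: (chain _ _ _ P0 hP y0 sq_inj ys).
Qed.

Lemma lm1_inj u : lm1 u = 0 -> u = 0.
Proof.
move=> hu; apply/eqP/negPn/negP => u0.
pose y k := iter k l1 u.
have ys k : cas (y k) = pev (tq k) (y k).
  elim: k => [|k IH] /=.
    have := cas_alt rho u; rewrite hu (lin0 (l1_lin rho)) => /eqP; rewrite eq_sym subr_eq0.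
    by move=> /eqP <-; rewrite /tq addr0 pev_XX1.
  by rewrite cas1 IH l1_pev tq_shift.
have y0 k : y k != 0.
  elim: k => [|k IH] //=; apply/negP => /eqP /l1_inj H.
  by rewrite H eqxx in IH.
exact: (chain _ _ _ P0 hP y0 tq_inj ys).
Qed.

Lemma shift_inv Q : (forall v, act Q v = 0) ->
  forall v, act (map_poly (fun a => a \Po ('X + 1%:P)) Q) v = 0.
Proof.
move=> hQ v; set Qs := map_poly _ Q; set w := act Qs v.
apply: lm1_inj; apply: l1_inj.
rewrite cas_alt /w act_l0 -actDv act_l0 act_cas -(linB (act_lin Qs)) -cas_alt.
by rewrite act_shift hQ (lin0 (l1_lin rho)).
Qed.

End Inj.


Lemma shift_size (p : {poly K}) : (size (p \Po ('X + 1%:P) - p)%R <= (size p).-1)%N.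
Proof.
have [->|p0] := eqVneq p 0; first by rewrite comp_poly0 subr0 size_poly0.
have sz : size (p \Po ('X + 1%:P)) = size p by apply: size_comp_poly2; exact: size_XaddC.
have lc : lead_coef (p \Po ('X + 1%:P)) = lead_coef p.
  by rewrite lead_coef_comp ?size_XaddC // lead_coefXaddC expr1n mulr1.
apply/leq_sizeP => j hj; rewrite coefB.
have [->|hne] := eqVneq j (size p).-1.
  by move: lc; rewrite !lead_coefE sz => ->; rewrite subrr.
have hj' : (size p <= j)%N.
  move: hj hne; rewrite -(prednK (n := size p)) ?size_poly_gt0 //= => a b.
  by rewrite ltn_neqAle eq_sym b a.
by rewrite !nth_default ?subrr // sz.
Qed.

Lemma shift_neq0 (p : {poly K}) : (1 < size p)%N -> p \Po ('X + 1%:P) - p != 0.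
Proof.
move=> hs; apply/negP => /eqP /subr0_eq H.
have hn n : p.[n%:R] = p.[0].
  elim: n => [|n IH] //; by rewrite -IH -{2}H horner_comp !hornerE natr1.
pose q := p - (p.[0])%:P.
have q0 : q != 0.
  apply/negP => /eqP /subr0_eq hq.
  by move: hs; rewrite hq size_polyC; case: (_ != 0).
have hall : all (root q) (map (fun n => n%:R) (iota 0 (size q))).
  apply/allP => x /mapP [m _ ->]; rewrite /root /q !hornerE hn subrr //.
have hu : uniq (map (fun n => (n%:R : K)) (iota 0 (size q))).
  rewrite map_inj_uniq ?iota_uniq // => a b /eqP; by rewrite eqr_nat => /eqP.
have := max_poly_roots q0 hall hu.
by rewrite size_map size_iota ltnn.
Qed.

Lemma const_case (P : {poly {poly K}}) : P != 0 -> (forall v, act P v = 0) ->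
  (forall i, (size (P`_i)%R <= 1)%N) ->
  exists p : {poly K}, p != 0 /\ forall v, cpol rho p v = 0.
Proof.
move=> P0 hP hs; pose p := map_poly (fun a : {poly K} => a`_0) P.
have hPe : P = map_poly polyC p.
  apply/polyP => i; rewrite coef_map /= coef_map_id0 ?coef0 //.
  exact: size1_polyC.
exists p; split.
  by apply: contraNneq P0 => p0; rewrite hPe p0 map_poly0.
move=> v; rewrite -(hP v) hPe /act /gev /cpol /gev size_map_polyC.
by apply: eq_bigr => i _; rewrite coef_map /= pevC.
Qed.


Lemma descent n : forall P : {poly {poly K}}, P != 0 -> (forall v, act P v = 0) ->
  (forall i, (size (P`_i)%R <= n)%N) ->
  exists p : {poly K}, p != 0 /\ forall v, cpol rho p v = 0.
Proof.
elim: n => [|n IH] P P0 hP hs.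
  case/negP: P0; apply/eqP/polyP => i; rewrite coef0.
  by apply/eqP; rewrite -size_poly_leq0 hs.
case: n IH hs => [|n] IH hs.
  exact: (const_case P P0 hP hs).
case: (classic (forall i, (size (P`_i)%R <= n.+1)%N)) => [hs'|hn]; first exact: (IH P P0 hP hs').
move: hn => /not_all_ex_not [i hi].
have szi : size (P`_i) = n.+2.
  by apply/eqP; rewrite eqn_leq hs /=; rewrite ltnNge; apply/negP.
pose Q := map_poly (fun a => a \Po ('X + 1%:P)) P - P.
have cQ j : Q`_j = P`_j \Po ('X + 1%:P) - P`_j.
  by rewrite coefB coef_map_id0 // comp_poly0.
apply: (IH Q).
- apply/negP => /eqP Q0; move: (cQ i); rewrite Q0 coef0 => /esym/eqP.
  by apply/negP; apply: shift_neq0; rewrite szi.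
- by move=> v; rewrite actB (shift_inv P P0 hP P hP) hP subrr.
- move=> j; rewrite cQ; apply: leq_trans (shift_size _) _.
  by move: (hs j); case: (size _).
Qed.

End E.

Section F.
Variables (K : numClosedFieldType) (V : lmodType K) (rho : sl2rep V).
Local Notation l0 := (L0 rho).
Local Notation l1 := (L1 rho).
Local Notation lm1 := (Lm1 rho).
Local Notation cas := (casimir rho).
Local Notation pev := (peval rho).
Local Notation act := (act rho).

Section Gq.
Variable Q : {poly K}.
Definition Cq (v : V) := pev Q (cas v).
Local Notation G := (gev pev Cq).

Let aDv : forall a u v, pev a (u + v) = pev a u + pev a v. Proof. exact: pevDv. Qed.
Let aDr : forall a b v, pev (a + b) v = pev a v + pev b v. Proof. exact: pevD. Qed.
Let a0 : forall v, pev 0 v = 0. Proof. exact: pev0. Qed.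
Let a1 : forall v, pev 1 v = v. Proof. exact: pev1. Qed.
Let aM : forall a b v, pev (a * b) v = pev a (pev b v). Proof. exact: pevM. Qed.
Let aT : forall a v, pev a (Cq v) = Cq (pev a v).
Proof. by move=> a v; rewrite /Cq -!pevM mulrC pevM pevcas. Qed.
Let aTD : forall u v, Cq (u + v) = Cq u + Cq v.
Proof. by move=> u v; rewrite /Cq (linD (cas_lin rho)) pevDv. Qed.

Lemma gqD P R v : G (P + R) v = G P v + G R v. Proof. exact: gevD. Qed.
Lemma gqB P R v : G (P - R) v = G P v - G R v. Proof. exact: gevB. Qed.
Lemma gq0 v : G 0 v = 0. Proof. exact: gev0. Qed.
Lemma gqC c v : G c%:P v = pev c v. Proof. exact: gevC. Qed.
Lemma gqX v : G 'X v = Cq v. Proof. exact: gevX. Qed.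
Lemma gqM P R v : G (P * R) v = G P (G R v). Proof. exact: gevM. Qed.
Lemma gq_v0 P : G P 0 = 0. Proof. exact: gev_v0. Qed.
Lemma gq_sumv P I (r : seq I) (Pr : pred I) (F : I -> V) :
  G P (\sum_(i <- r | Pr i) F i) = \sum_(i <- r | Pr i) G P (F i).
Proof. exact: gev_sumv. Qed.
Lemma gq_sumP I (r : seq I) (Pr : pred I) (F : I -> {poly {poly K}}) v :
  G (\sum_(i <- r | Pr i) F i) v = \sum_(i <- r | Pr i) G (F i) v.
Proof. exact: gev_sumP. Qed.
Lemma gq_pev P q v : G P (pev q v) = pev q (G P v).
Proof.
symmetry; apply: gev_comm => // a w; by rewrite -!pevM mulrC.
Qed.
Lemma gq_iter k v : iter k Cq v = pev (Q ^+ k) (iter k cas v).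
Proof.
elim: k => [|k IH] /=; first by rewrite expr0 pev1.
by rewrite IH /Cq -pevcas -pevM -exprS.
Qed.
Lemma gq_conv P v : G P v = act (\poly_(k < size P) (P`_k * Q ^+ k)) v.
Proof.
rewrite (@act_pad _ _ rho _ (size P)); last exact: size_poly.
rewrite /gev; apply: eq_bigr => i _; rewrite coef_poly ltn_ord gq_iter pevM.
by [].
Qed.
End Gq.


Hypothesis hinj : forall p : {poly K}, p != 0 -> forall v, pev p v = 0 -> v = 0.

Lemma exists_annih (d : nat) (x : 'I_d -> V) :
  (forall v, exists q (ps : 'I_d -> {poly K}),
      q != 0 /\ pev q v = \sum_(i < d) pev (ps i) (x i)) ->
  exists P : {poly {poly K}}, P != 0 /\ forall v, act P v = 0.
Proof.
move=> span.
have H j : exists qps : {poly K} * ('I_d -> {poly K}), qps.1 != 0 /\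
    pev qps.1 (cas (x j)) = \sum_(i < d) pev (qps.2 i) (x i).
  by have [q [ps [q0 e]]] := span (cas (x j)); exists (q, ps).
pose qf j := (proj1_sig (constructive_indefinite_description _ (H j))).1.
pose psf j := (proj1_sig (constructive_indefinite_description _ (H j))).2.
have qf0 j : qf j != 0.
  by rewrite /qf; case: (constructive_indefinite_description _ _) => [[? ?] []].
have qfe j : pev (qf j) (cas (x j)) = \sum_i pev (psf j i) (x i).
  by rewrite /qf /psf; case: (constructive_indefinite_description _ _) => [[? ?] []].
pose Q := \prod_(j < d) qf j.
have Q0 : Q != 0 by apply/prodf_neq0 => j _; exact: qf0.
pose b j i := (\prod_(l < d | l != j) qf l) * psf j i.
have rowrel j : Cq Q (x j) = \sum_i pev (b j i) (x i).
  rewrite /Cq /Q (bigD1 j) //= mulrC pevM qfe pev_sumv.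
  by apply: eq_bigr => i _; rewrite pevM.
pose B : 'M[{poly K}]_d := \matrix_(j, i) b j i.
pose A := char_poly_mx B.
have Arow j : \sum_i gev pev (Cq Q) (A j i) (x i) = 0.
  have -> : \sum_i gev pev (Cq Q) (A j i) (x i) =
      \sum_i (gev pev (Cq Q) ('X *+ (j == i)) (x i) - pev (b j i) (x i)).
    by apply: eq_bigr => i _; rewrite /A /char_poly_mx !mxE gqB gqC.
  rewrite sumrB (bigD1 j) //= eqxx mulr1n gqX big1 ?addr0 ?rowrel ?subrr // => i /negbTE.
  by rewrite eq_sym => ->; rewrite mulr0n gq0.
have Adet k : gev pev (Cq Q) (\det A) (x k) = 0.
  have e : gev pev (Cq Q) (\det A) (x k) = \sum_i gev pev (Cq Q) ((\adj A *m A) k i) (x i).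
    rewrite mul_adj_mx (bigD1 k) //= mxE eqxx mulr1n big1 ?addr0 // => i /negbTE.
    by rewrite mxE eq_sym => ->; rewrite mulr0n gq0.
  rewrite e (eq_bigr (fun i => \sum_j gev pev (Cq Q) (\adj A k j) (gev pev (Cq Q) (A j i) (x i)))); last first.
    by move=> i _; rewrite mxE gq_sumP; apply: eq_bigr => j _; rewrite gqM.
  rewrite exchange_big /= big1 // => j _; by rewrite -gq_sumv Arow gq_v0.
pose chi := char_poly B.
have hall v : gev pev (Cq Q) chi v = 0.
  have [q [ps [q0 e]]] := span v.
  apply: (hinj _ q0); rewrite -gq_pev e gq_sumv big1 // => i _.
  by rewrite gq_pev Adet pev_v0.
exists (\poly_(k < size chi) (chi`_k * Q ^+ k)); split; last first.
  by move=> v; rewrite -gq_conv hall.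
have mon : chi \is monic by exact: char_poly_monic.
have sz : (0 < size chi)%N by rewrite size_poly_gt0 monic_neq0.
apply/negP => /eqP P0.
have := congr1 (fun R : {poly {poly K}} => R`_(size chi).-1) P0; rewrite /= coef_poly coef0.
rewrite prednK // leqnn -lead_coefE (monicP mon) mul1r => /eqP.
by rewrite expf_eq0 (negbTE Q0) andbF.
Qed.

End F.

Section G.
Variables (K : numClosedFieldType) (V : lmodType K) (rho : sl2rep V).
Local Notation e := (rho_e rho).
Local Notation f := (rho_f rho).
Local Notation h := (rho_h rho).
Local Notation l0 := (L0 rho).
Local Notation l1 := (L1 rho).
Local Notation lm1 := (Lm1 rho).
Local Notation cas := (casimir rho).
Local Notation pev := (peval rho).
Local Notation act := (act rho).
Local Notation cpol := (cpol rho).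

Lemma e_l1 v : e v = - l1 v. Proof. by rewrite /L1 opprK. Qed.
Lemma h_l0 v : h v = - (2%:R *: l0 v).
Proof. by rewrite /L0 scalerN opprK scalerA mulfV ?two_neq0 // scale1r. Qed.

Lemma cas_e v : cas (e v) = e (cas v).
Proof. by rewrite !e_l1 (linN (cas_lin rho)) cas1. Qed.
Lemma cas_f v : cas (f v) = f (cas v).
Proof. exact: casm. Qed.
Lemma cas_h v : cas (h v) = h (cas v).
Proof. by rewrite !h_l0 (linN (cas_lin rho)) (linZ (cas_lin rho)) cas0. Qed.

Lemma cpol_submod r : is_submod rho (fun v => cpol r v = 0).
Proof.
split; split.
- exact: cpol_v0.
- by move=> u v hu hv; rewrite cpolDv hu hv addr0.
- by move=> a u hu; rewrite cpolZv hu scaler0.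
- move=> u hu; rewrite -(@cpol_comm _ _ rho e (e_lin rho)) ?hu ?(lin0 (e_lin rho)) //.
  by move=> w; rewrite cas_e.
- move=> u hu; rewrite -(@cpol_comm _ _ rho f (f_lin rho)) ?hu ?(lin0 (f_lin rho)) //.
  by move=> w; rewrite cas_f.
- move=> u hu; rewrite -(@cpol_comm _ _ rho h (h_lin rho)) ?hu ?(lin0 (h_lin rho)) //.
  by move=> w; rewrite cas_h.
Qed.

Lemma cpol_XsubC_exp (mu : K) m v :
  cpol (('X - mu%:P) ^+ m) v = iter m (fun w => cas w - mu *: w) v.
Proof.
elim: m => [|m IH] /=; first by rewrite expr0 cpol1.
by rewrite exprS cpolM IH cpolB cpolX cpolC.
Qed.

Lemma primary (p : {poly K}) : p != 0 -> (forall v, cpol p v = 0) ->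
  indecomposable rho -> gen_casimir rho.
Proof.
move=> p0 hp [[w [_ w0]] hind].
have main n : forall p : {poly K}, (size p <= n)%N -> p != 0 ->
    (forall v, cpol p v = 0) -> gen_casimir rho.
  elim: n => [|n IH] {}p hs {}p0 {}hp.
    by move: hs; rewrite leqn0 size_poly_eq0 (negbTE p0).
  have [s1|s1] := eqVneq (size p) 1.
    have pc : p = (p`_0)%:P by apply: size1_polyC; rewrite s1.
    have c0 : p`_0 != 0 by apply: contraNneq p0 => c0; rewrite pc c0.
    move: (hp w); rewrite pc cpolC => /eqP; rewrite scaler_eq0 (negbTE c0) /=.
    by rewrite (negbTE w0).
  have [mu rmu] := closed_rootP p s1.
  have [m [q rq pe]] := multiplicity_XsubC p mu.
  rewrite p0 /= in rq.
  have m0 : (0 < m)%N.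
    rewrite lt0n; apply: contraNneq rq => m0; by rewrite pe m0 expr0 mulr1 in rmu.
  have q0 : q != 0 by apply: contraNneq p0 => q0; rewrite pe q0 mul0r.
  have cop : coprimep q (('X - mu%:P) ^+ m).
    by apply: coprimep_expr; rewrite coprimep_XsubC.
  have [[u1 u2] /= hu] := Bezout_eq1_coprimepP _ _ cop.
  pose X := ('X - mu%:P) ^+ m.
  pose S1 := fun v => cpol X v = 0.
  pose S2 := fun v => cpol q v = 0.
  have dec v : v = cpol (u1 * q) v + cpol (u2 * X) v by rewrite -cpolD hu cpol1.
  have in1 v : S1 (cpol (u1 * q) v).
    by rewrite /S1 -cpolM mulrCA [X * q]mulrC -pe cpolM hp cpol_v0.
  have in2 v : S2 (cpol (u2 * X) v).
    by rewrite /S2 -cpolM mulrCA -pe cpolM hp cpol_v0.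
  case: (classic (nonzero_on S1)) => n1; case: (classic (nonzero_on S2)) => n2.
  - case: hind; exists S1, S2; split; first by split; [exact: cpol_submod|exact: cpol_submod|by []|by []].
    split => //; split.
      move=> v h1 h2; rewrite (dec v) !cpolM h1 h2 !cpol_v0 addr0 //.
    move=> v; split => // _; exists (cpol (u1 * q) v), (cpol (u2 * X) v); split => //.
  - exists mu, m; split => // v _; rewrite -cpol_XsubC_exp.
    have : cpol (u2 * X) v = 0.
      apply: NNPP => hne; apply: n2; exists (cpol (u2 * X) v); split => //; exact/eqP.
    by move=> h2; rewrite {1}(dec v) h2 addr0; apply: in1.
  - apply: (IH q) => //.
      rewrite -ltnS; apply: leq_trans hs; rewrite pe size_mul ?expf_neq0 ?polyXsubC_eq0 //.
      by rewrite size_exp_XsubC addnS /= -{1}[size q]addn0 ltn_add2l.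
    move=> v; have : cpol (u1 * q) v = 0.
      apply: NNPP => hne; apply: n1; exists (cpol (u1 * q) v); split => //; exact/eqP.
    by move=> h1; rewrite {1}(dec v) h1 add0r; apply: in2.
  - exists mu, m; split => // v _; rewrite -cpol_XsubC_exp.
    have : cpol (u2 * X) v = 0.
      apply: NNPP => hne; apply: n2; exists (cpol (u2 * X) v); split => //; exact/eqP.
    by move=> h2; rewrite {1}(dec v) h2 addr0; apply: in1.
exact: (main _ p (leqnn _) p0 hp).
Qed.

End G.

Section H.
Variables (K : numClosedFieldType) (V : lmodType K) (rho : sl2rep V).
Local Notation e := (rho_e rho).
Local Notation f := (rho_f rho).
Local Notation h := (rho_h rho).
Local Notation l0 := (L0 rho).
Local Notation cas := (casimir rho).
Local Notation pev := (peval rho).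

Section Sub.
Context {S : V -> Prop}.
Hypothesis hS : is_submod rho S.

Lemma sm0 : S 0. Proof. by case: hS => [[]]. Qed.
Lemma smD u v : S u -> S v -> S (u + v). Proof. by case: hS => [[_ hD _] _]; apply: hD. Qed.
Lemma smZ a u : S u -> S (a *: u). Proof. by case: hS => [[_ _ hZ] _]; apply: hZ. Qed.
Lemma smh u : S u -> S (h u). Proof. by case: hS => _ [_ _ hh]; apply: hh. Qed.
Lemma smN u : S u -> S (- u). Proof. by move=> hu; rewrite -scaleN1r; apply: smZ. Qed.
Lemma smB u v : S u -> S v -> S (u - v). Proof. by move=> hu hv; apply: smD => //; apply: smN. Qed.
Lemma sml0 u : S u -> S (l0 u). Proof. by move=> hu; rewrite /L0; apply: smN; apply: smZ; apply: smh. Qed.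
Lemma sm_sum I (r : seq I) (P : pred I) (F : I -> V) :
  (forall i, P i -> S (F i)) -> S (\sum_(i <- r | P i) F i).
Proof. move=> hF; apply: big_ind => //; [exact: sm0|exact: smD]. Qed.
Lemma sm_pev p u : S u -> S (pev p u).
Proof.
move=> hu; apply: sm_sum => i _; apply: smZ.
by elim: (i : nat) => //= k; apply: sml0.
Qed.
End Sub.

Lemma sum_cast (n m : nat) (eq : m = n) (F : 'I_n -> V) :
  \sum_(i < m) F (cast_ord eq i) = \sum_(i < n) F i.
Proof. by case: n / eq F => F; apply: eq_bigr => i _; rewrite cast_ord_id. Qed.

Lemma summand_rational (S1 S2 : V -> Prop) : rational_mod rho ->
  is_submod rho S1 -> is_submod rho S2 -> direct_sum (@whole K V) S1 S2 -> rational_on rho S1.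
Proof.
move=> [hrat [vs [_ hspan]]] hs1 hs2 [hint hdec].
have hd v : exists v1, S1 v1 /\ S2 (v - v1).
  have [v1 [v2 [h1 h2 ->]]] := (hdec v).1 I.
  by exists v1; split => //; rewrite addrC addKr.
have uniq a b a' b' : S1 a -> S2 b -> S1 a' -> S2 b' -> a + b = a' + b' -> a = a'.
  move=> ha hb ha' hb' eq; apply/eqP; rewrite -subr_eq0; apply/eqP.
  apply: hint; first exact: smB.
  have -> : a - a' = b' - b.
    by rewrite -[a](addrK b) eq addrAC [a' + b']addrC addrK.
  exact: smB.
pose pr1 v := sval (constructive_indefinite_description _ (hd v)).
have pr1P v : S1 (pr1 v) /\ S2 (v - pr1 v).
  by rewrite /pr1; case: (constructive_indefinite_description _ _).
split.
  move=> p p0; split; first by move=> v _; exact: (hrat p p0).1 v I.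
  move=> w hw; have [v [_ pv]] := (hrat p p0).2 w I.
  have [h1 h2] := pr1P v.
  exists (pr1 v); split; first exact: h1.
  apply: (uniq _ (pev p (v - pr1 v)) _ 0) => //.
  - exact: (sm_pev hs1).
  - exact: (sm_pev hs2).
  - exact: (sm0 hs2).
  by rewrite -pevDv addrC subrK pv addr0.
exists (map pr1 vs); split.
  move=> i; rewrite size_map => hi; rewrite (nth_map 0) //; exact: (pr1P _).1.
move=> v hv; have [q [ps [q0 eq]]] := hspan v I.
exists q, (fun i => ps (cast_ord (size_map pr1 vs) i)); split => //.
rewrite (eq_bigr (fun i => (fun j => pev (ps j) (pr1 (nth 0 vs j))) (cast_ord (size_map pr1 vs) i))); last first.
  move=> i _ /=; congr (pev _ _); rewrite (nth_map 0) //.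
  by move: (ltn_ord i); rewrite {2}size_map.
rewrite (@sum_cast _ _ (size_map pr1 vs) (fun j => pev (ps j) (pr1 (nth 0 vs j)))).
apply: (uniq _ 0 _ (\sum_(i < size vs) pev (ps i) (nth 0 vs i - pr1 (nth 0 vs i)))).
- exact: (sm_pev hs1).
- exact: (sm0 hs2).
- apply: (sm_sum hs1) => i _; apply: (sm_pev hs1); exact: (pr1P _).1.
- apply: (sm_sum hs2) => i _; apply: (sm_pev hs2); exact: (pr1P _).2.
rewrite addr0 eq -big_split /=; apply: eq_bigr => i _.
by rewrite -pevDv addrC subrK.
Qed.

Lemma indec_mono (P Q : (V -> Prop) -> Prop) : (forall S, P S -> Q S) ->
  indec_wrt rho Q (@whole K V) -> indec_wrt rho P (@whole K V).
Proof.
move=> hPQ [nz hn]; split => // [[S1 [S2 [[a b c d] rest]]]]; apply: hn.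
by exists S1, S2; split => //; split => //; apply: hPQ.
Qed.

Lemma direct_sum_sym (S S1 S2 : V -> Prop) : direct_sum S S1 S2 -> direct_sum S S2 S1.
Proof.
move=> [hi hd]; split; first by move=> v a b; exact: hi.
move=> v; rewrite hd; split => [[v1 [v2 [a b ->]]]|[v1 [v2 [a b ->]]]];
  by exists v2, v1; rewrite addrC.
Qed.

Lemma rat_indec_iff : rational_mod rho ->
  (indecomposable rho <-> R_indecomposable rho).
Proof.
move=> hr; split; first by apply: indec_mono.
move=> [nz hn]; split => // [[S1 [S2 [[a b _ _] [n1 n2 ds]]]]]; apply: hn.
exists S1, S2; split; split => //.
  exact: (summand_rational _ _ hr a b ds).
exact: (summand_rational _ _ hr b a (direct_sum_sym _ _ _ ds)).
Qed.

Lemma rat_hinj : rational_mod rho ->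
  forall p : {poly K}, p != 0 -> forall v, pev p v = 0 -> v = 0.
Proof. by move=> [hrat _] p p0 v; exact: (hrat p p0).1 v I. Qed.

Lemma bound_coef (P : {poly {poly K}}) :
  forall i, (size (P`_i)%R <= \sum_(j < size P) size (P`_j)%R)%N.
Proof.
move=> i; case: (ltnP i (size P)) => hi.
  by rewrite (bigD1 (Ordinal hi)) //= leq_addr.
by rewrite nth_default // size_poly0.
Qed.

Lemma rat_indec_gen : rational_mod rho -> indecomposable rho -> gen_casimir rho.
Proof.
move=> hr hind; have hinj := rat_hinj hr.
have [_ [vs [_ hspan]]] := hr.
have span v : exists q (ps : 'I_(size vs) -> {poly K}),
    q != 0 /\ pev q v = \sum_(i < size vs) pev (ps i) ((fun i : 'I_(size vs) => nth 0 vs i) i).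
  exact: hspan v I.
have [P [P0 hP]] := @exists_annih K V rho hinj _ _ span.
have [p [p0 hp]] := @descent K V rho hinj _ P P0 hP (bound_coef P).
exact: (@primary K V rho p p0 hp hind).
Qed.

End H.

Section Fin.
Variables (K : numClosedFieldType) (V : lmodType K) (rho : sl2rep V).

Lemma gen_restrict : gen_casimir rho -> forall S, gen_casimir_on rho S.
Proof. by move=> [mu [n [n0 hn]]] S; exists mu, n; split => // v _; exact: hn. Qed.

Lemma RC_to_R : gen_casimir rho -> RC_indecomposable rho -> R_indecomposable rho.
Proof.
move=> hg [nz hn]; split => // [[S1 [S2 [[a b c d] rest]]]]; apply: hn.
by exists S1, S2; split => //; split => //; split => //; exact: gen_restrict.
Qed.

Lemma main_all :
  (rational_mod rho -> (indecomposable rho <-> R_indecomposable rho)) /\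
  (rational_mod rho -> indecomposable rho -> gen_casimir rho) /\
  ((rational_mod rho /\ indecomposable rho) <-> (rational_mod rho /\ R_indecomposable rho)) /\
  ((rational_mod rho /\ R_indecomposable rho) <->
     (rational_gen_casimir rho /\ RC_indecomposable rho)) /\
  ((rational_gen_casimir rho /\ RC_indecomposable rho) <->
     (rational_gen_casimir rho /\ indecomposable rho)).
Proof.
split; first exact: (@rat_indec_iff _ _ rho).
split; first exact: (@rat_indec_gen _ _ rho).
split.
  by split=> [[hr hi]|[hr hi]]; split=> //; apply/(@rat_indec_iff _ _ rho hr).
split.
  split=> [[hr hRi]|[[hr hg] hRC]].
    have hi := (@rat_indec_iff _ _ rho hr).2 hRi.
    split; first by split=> //; exact: (@rat_indec_gen _ _ rho).
    exact: (@indec_mono _ _ rho _ _ (fun S _ => I) hi).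
  by split=> //; exact: RC_to_R.
split=> [[[hr hg] hRC]|[[hr hg] hi]]; split=> //.
  by apply/(@rat_indec_iff _ _ rho hr); exact: RC_to_R.
exact: (@indec_mono _ _ rho _ _ (fun S _ => I) hi).
Qed.
End Fin.

Theorem proposition6p10 (R : realType) (V : lmodType R[i]) (rho : sl2rep V) :
  (rational_mod rho -> (indecomposable rho <-> R_indecomposable rho)) /\
  (rational_mod rho -> indecomposable rho -> gen_casimir rho) /\
  ((rational_mod rho /\ indecomposable rho) <-> (rational_mod rho /\ R_indecomposable rho)) /\
  ((rational_mod rho /\ R_indecomposable rho) <->
     (rational_gen_casimir rho /\ RC_indecomposable rho)) /\
  ((rational_gen_casimir rho /\ RC_indecomposable rho) <->
     (rational_gen_casimir rho /\ indecomposable rho)).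
Proof. exact: (@main_all R[i] V rho). Qed.
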